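(* Let $(W,S)$ be a finitely generated Coxeter system and $u,v\in W$. (1) If $u\le v$, then $C(v)\subseteq C(u)$ (equivalently $S(u)\subseteq S(v)$). (2) If $u\le v$, then $[u,v]=\{v_I: S(u)\subseteq I\subseteq S(v)\}$. (3) If $u\le v$, then $u\le_{\mathcal L} v$. (4) If $W_{S(u)}$ has finite index $k$ in $W$, then $|\{w\in W: w\ge u\}|=k$.
   Context: $(W,S)$ is a finitely generated Coxeter system with length function $\ell$. For $w\in W$, $S(w)\subseteq S$ is the set of simple reflections appearing in a (any) reduced expression of $w$, and $C(w)=S\setminus S(w)$. For $I\subseteq S$, $W_I$ is the parabolic subgroup generated by $I$, $X_I=\{u\in W:\ell(us)>\ell(u)\ \forall s\in I\}$, and every $w\in W$ factors uniquely as $w=w^Iw_I$ with $w^I\in X_I$, $w_I\in W_I$ (parabolic components along $I$), with $\ell(w)=\ell(w^I)+\ell(w_I)$. The partial order on $W$: $u\le v$ if and only if $v_{S(u)}=u$. The left weak order: $u\le_{\mathcal L}v$ iff there is $v'\in W$ with $v=v'u$ and $\ell(v)=\ell(v')+\ell(u)$. *)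

(* Defs.v *)
From HB Require Import structures.
From mathcomp Require Import all_boot.
From Stdlib Require Import ClassicalEpsilon.

Set Implicit Arguments.
Unset Strict Implicit.
Unset Printing Implicit Defensive.

Local Open Scope group_scope.

Section Coxeter.

(* W : a group; the set S of simple reflections is the (finite) image of the
   map  s : I -> W  indexed by a finite type I (s will be injective). *)
Variables (W : groupType) (I : finType) (s : I -> W).

Definition wval (t : seq I) : W := foldr (fun i w => s i * w) 1 t.

(* (W,S) is a Coxeter system: S = s(I) is a finite set of involutions
   (distinct, different from 1) generating W, and W has the presentation
   < S | (st)^{m(s,t)} = 1 >, m(s,t) the order of st, expressed by the
   universal property of the presentation: every map f of S into a group G
   satisfying the relations of W between the products st extends to a
   homomorphism W -> G. *)
Definition coxeter_system : Prop :=
  [/\ injective s,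
      forall i, s i != 1,
      forall i, s i * s i = 1,
      forall w : W, exists t : seq I, wval t = w
    & forall (G : groupType) (f : I -> G),
        (forall i j n, (s i * s j) ^+ n = 1 -> (f i * f j) ^+ n = 1) ->
        exists phi : W -> G,
          (forall x y, phi (x * y) = phi x * phi y) /\
          (forall i, phi (s i) = f i)].

Definition len (w : W) : nat :=
  epsilon (inhabits 0%N)
    (fun n => (exists t, size t = n /\ wval t = w) /\
              (forall t, wval t = w -> (n <= size t)%N)).

Definition pbool (P : Prop) : bool :=
  if excluded_middle_informative P then true else false.

Definition supp (w : W) : {set I} :=
  [set i | pbool (exists t, wval t = w /\ size t = len w /\ i \in t)].

Definition csupp (w : W) : {set I} := ~: supp w.

Definition inPar (J : {set I}) (w : W) : Prop :=
  exists t : seq I, (forall i, i \in t -> i \in J) /\ wval t = w.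

Definition inX (J : {set I}) (u : W) : Prop :=
  forall i, i \in J -> (len u < len (u * s i))%N.

Definition parcomp (J : {set I}) (w : W) : W :=
  epsilon (inhabits (1 : W))
    (fun b => exists a, [/\ inX J a, inPar J b & w = a * b]).

Definition cox_le (u v : W) : Prop := parcomp (supp u) v = u.

Definition leftweak (u v : W) : Prop :=
  exists v', v = v' * u /\ len v = (len v' + len u)%N.

Definition par_index (J : {set I}) (k : nat) : Prop :=
  exists r : 'I_k -> W,
    (forall a b, inPar J ((r a)^-1 * r b) -> a = b) /\
    (forall w, exists a, inPar J ((r a)^-1 * w)).

Definition upset_card (u : W) (k : nat) : Prop :=
  exists g : 'I_k -> W, injective g /\
    (forall w, cox_le u w <-> exists a, g a = w).

End Coxeter.

(* Main.v *)
From HB Require Import structures.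
From mathcomp Require Import all_boot.
From mathcomp Require boolp.
From mathcomp Require Import zify.
Set Implicit Arguments.
Unset Strict Implicit.
Unset Printing Implicit Defensive.
Local Open Scope group_scope.
Definition SD (W : groupType) := (W * (W -> bool))%type.
HB.instance Definition _ (W : groupType) := boolp.gen_eqMixin (SD W).
HB.instance Definition _ (W : groupType) := boolp.gen_choiceMixin (SD W).
Section SDs.
Variable W : groupType.
Definition sdmul (x y : SD W) : SD W :=
  (x.1 * y.1, fun z => x.2 z (+) y.2 (z ^ x.1)).
Definition sdone : SD W := (1, fun _ => false).
Definition sdinv (x : SD W) : SD W := (x.1^-1, fun z => x.2 (z ^ x.1^-1)).
Lemma sdmulA : associative sdmul.
Proof. move=> [a A] [b B] [c C]; rewrite /sdmul /=; congr pair; first by rewrite mulgA.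
apply: boolp.funext => z. by rewrite addbA conjgM. Qed.
Lemma sd1m : left_id sdone sdmul.
Proof. move=> [a A]; rewrite /sdmul /=; congr pair; first by rewrite mul1g.
by apply: boolp.funext => z; rewrite conjg1. Qed.
Lemma sdm1 : right_id sdone sdmul.
Proof. move=> [a A]; rewrite /sdmul /=; congr pair; first by rewrite mulg1.
by apply: boolp.funext => z; rewrite addbF. Qed.
Lemma sdVm : left_inverse sdone sdinv sdmul.
Proof. move=> [a A]; rewrite /sdmul /=; congr pair; first by rewrite mulVg.
by apply: boolp.funext => z; rewrite addbb. Qed.
Lemma sdmV : right_inverse sdone sdinv sdmul.
Proof. move=> [a A]; rewrite /sdmul /=; congr pair; first by rewrite mulgV.
by apply: boolp.funext => z; rewrite conjgK addbb. Qed.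
End SDs.
HB.instance Definition _ (W : groupType) :=
  isGroup.Build (SD W) (@sdmulA W) (@sd1m W) (@sdm1 W) (@sdVm W) (@sdmV W).

Require Import Defs.
From Stdlib Require Import ClassicalEpsilon.

Section Cox.
Variables (W : groupType) (I : finType) (s : I -> W).
Hypothesis HW : coxeter_system s.

Local Notation wv := (wval s).
Local Notation len := (len s).

Lemma sK i : s i * s i = 1.
Proof. by case: HW. Qed.

Lemma sV i : (s i)^-1 = s i.
Proof. by apply: mulg1_eq; rewrite sK. Qed.

Lemma s_inj : injective s.
Proof. by case: HW. Qed.

Lemma s_neq1 i : s i != 1.
Proof. by case: HW. Qed.

Lemma wv_cat t1 t2 : wv (t1 ++ t2) = wv t1 * wv t2.
Proof. by elim: t1 => [|i t IH] /=; rewrite ?mul1g // IH mulgA. Qed.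

Lemma wv_cons i t : wv (i :: t) = s i * wv t.
Proof. by []. Qed.

Lemma wv_rcons t i : wv (rcons t i) = wv t * s i.
Proof. by rewrite -cats1 wv_cat /= mulg1. Qed.

Lemma wv_rev t : wv (rev t) = (wv t)^-1.
Proof.
elim: t => [|i t IH] /=; first by rewrite invg1.
by rewrite rev_cons wv_rcons IH invgM sV.
Qed.

Lemma wv_ex w : exists t, wv t = w.
Proof. by case: HW. Qed.

Lemma pboolP (P : Prop) : pbool P <-> P.
Proof. by rewrite /pbool; case: excluded_middle_informative. Qed.

Lemma len_spec w : (exists t, size t = len w /\ wv t = w) /\
   (forall t, wv t = w -> len w <= size t).
Proof.
rewrite /Defs.len.
apply: (@epsilon_spec nat (inhabits 0%N) (fun n => (exists t, size t = n /\ wv t = w) /\ (forall t, wv t = w -> n <= size t))).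
have ex : exists n, pbool (exists t, size t = n /\ wv t = w).
  by case: (wv_ex w) => t <-; exists (size t); apply/pboolP; exists t.
case: (ex_minnP ex) => n /pboolP [t [Ht Hw]] Hmin; exists n; split.
  by exists t.
by move=> t' Ht'; apply: Hmin; apply/pboolP; exists t'.
Qed.

Lemma len_min t : len (wv t) <= size t.
Proof. by case: (len_spec (wv t)) => _; apply. Qed.

Lemma len_red w : exists t, size t = len w /\ wv t = w.
Proof. by case: (len_spec w). Qed.

Lemma len1 : len 1 = 0.
Proof. by have := len_min [::]; rewrite leqn0 => /eqP. Qed.

Lemma len_eq0 w : len w = 0 -> w = 1.
Proof. by move=> H; case: (len_red w) => [[|i t] [Ht <-]] //; rewrite H in Ht. Qed.

Lemma lenV w : len w^-1 = len w.
Proof.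
suff H : forall x, len x^-1 <= len x.
  by apply/eqP; rewrite eqn_leq H /=; have := H w^-1; rewrite invgK.
move=> x; case: (len_red x) => t [<- <-].
by rewrite -wv_rev; apply: leq_trans (len_min _) _; rewrite size_rev.
Qed.

Lemma len_mul x y : len (x * y) <= len x + len y.
Proof.
case: (len_red x) => t1 [<- <-]; case: (len_red y) => t2 [<- <-].
by rewrite -wv_cat -size_cat len_min.
Qed.

Lemma len_s i : len (s i) = 1%N.
Proof.
apply/eqP; rewrite eqn_leq.
have -> : len (s i) <= 1%N by have := len_min [:: i]; rewrite /= mulg1.
rewrite lt0n; apply/negP => /eqP /len_eq0 H.
by move: (s_neq1 i); rewrite H eqxx.
Qed.

Lemma len_sL_le i w : len (s i * w) <= (len w).+1.
Proof. by apply: leq_trans (len_mul _ _) _; rewrite len_s. Qed.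

Lemma len_sR_le i w : len (w * s i) <= (len w).+1.
Proof. by apply: leq_trans (len_mul _ _) _; rewrite len_s addn1. Qed.

Lemma len_sL_ge i w : len w <= (len (s i * w)).+1.
Proof. by rewrite -{1}(mul1g w) -(sK i) -mulgA len_sL_le. Qed.

Lemma len_sR_ge i w : len w <= (len (w * s i)).+1.
Proof. by rewrite -{1}(mulg1 w) -(sK i) mulgA len_sR_le. Qed.


Fixpoint rl (t : seq I) : seq W :=
  if t is i :: t' then s i :: map (fun y => y ^ s i) (rl t') else [::].

Definition fg i : SD W := (s i, fun x => x == s i).

Definition sdw (t : seq I) : SD W := foldr (fun i g => fg i * g) 1 t.

Lemma conjss i y : (y ^ s i) ^ s i = y.
Proof. by rewrite -conjgM sK conjg1. Qed.

Lemma count_conj i x L :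
  count_mem x (map (fun y => y ^ s i) L) = count_mem (x ^ s i) L.
Proof.
rewrite count_map; apply: eq_count => y /=.
by rewrite -(inj_eq (@conjg_inj _ (s i))) conjss.
Qed.

Lemma sdwE t : sdw t = (wv t, fun x => odd (count_mem x (rl t))).
Proof.
elim: t => [|i t IH] //=.
change (@sdmul W (fg i) (sdw t) = (s i * wv t,
   fun x => odd (count_mem x (s i :: map (fun y => y ^ s i) (rl t))))).
rewrite IH /sdmul /=; congr pair; apply: boolp.funext => z /=.
by rewrite oddD count_conj eq_sym; case: (s i == z).
Qed.

Definition alt (i j : I) n := flatten (nseq n [:: i; j]).

Lemma sdw_alt i j n : (fg i * fg j) ^+ n = sdw (alt i j n).
Proof. by elim: n => [|n IH] //; rewrite expgS IH /= mulgA. Qed.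

Lemma wv_alt i j n : wv (alt i j n) = (s i * s j) ^+ n.
Proof. by elim: n => [|n IH] //; rewrite expgS -IH /= mulgA. Qed.

Lemma rl_alt i j n :
  rl (alt i j n) = [seq (s i * s j) ^+ m * s i | m <- iota 0 n.*2].
Proof.
elim: n => [|n IH] //.
rewrite doubleS /= IH.
set x := s i * s j.
have xV : x^-1 = s j * s i by rewrite /x invgM !sV.
have Hc : forall y, (y ^ s j) ^ s i = x * y * x^-1.
  move=> y; rewrite -conjgM -xV conjgE invgK mulgA //.
have Hs : s i * x^-1 = x * s i by rewrite xV /x !mulgA.
congr (_ :: _ :: _).
- by rewrite expg0 mul1g.
- by rewrite expg1 conjgE sV /x mulgA.
rewrite -(addn0 2) iotaDl -!map_comp; apply: eq_map => m; rewrite /comp.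
by clearbody x; rewrite Hc add2n expgS expgSr -!mulgA Hs !mulgA.
Qed.

Lemma rl_alt_even i j n x :
  (s i * s j) ^+ n = 1 -> odd (count_mem x (rl (alt i j n))) = false.
Proof.
move=> Hn; rewrite rl_alt -addnn iotaD /= map_cat.
have -> : [seq (s i * s j) ^+ m * s i | m <- iota n n] =
          [seq (s i * s j) ^+ m * s i | m <- iota 0 n].
  rewrite -{1}(addn0 n) iotaDl -map_comp; apply: eq_map => m /=.
  by rewrite expgnDr Hn mul1g.
by rewrite count_cat addnn odd_double.
Qed.

Lemma fg_rel i j n : (s i * s j) ^+ n = 1 -> (fg i * fg j) ^+ n = 1.
Proof.
move=> Hn; rewrite sdw_alt sdwE wv_alt Hn.
change (((1 : W), fun x => odd (count_mem x (rl (alt i j n)))) = sdone W).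
by rewrite /sdone; congr pair; apply: boolp.funext => x; rewrite rl_alt_even.
Qed.

Lemma parity t1 t2 x : wv t1 = wv t2 ->
  odd (count_mem x (rl t1)) = odd (count_mem x (rl t2)).
Proof.
case: HW => _ _ _ _ /(_ _ fg fg_rel) [phi [phiM phis]] E.
have phi1 : phi 1 = 1.
  by apply: (@mulgI _ (phi 1)); rewrite -phiM !mulg1.
have Hp : forall t, phi (wv t) = sdw t.
  by elim=> [|i t IH] //=; rewrite phiM phis IH.
have := Hp t1; rewrite E Hp !sdwE => /(congr1 (fun g => g.2 x)) /=.
by [].
Qed.

Lemma rl_size t : size (rl t) = size t.
Proof. by elim: t => //= i t IH; rewrite size_map IH. Qed.

Lemma exch_gen t x : x \in rl t ->
  exists t1 j t2, t = t1 ++ j :: t2 /\ x * wv t = wv (t1 ++ t2).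
Proof.
elim: t x => [|i t IH] x //=.
rewrite inE => /orP [/eqP -> | /mapP [y Hy ->]].
  by exists [::], i, t; split => //=; rewrite mulgA sK mul1g.
case: (IH y Hy) => t1 [j [t2 [-> E]]]; exists (i :: t1), j, t2; split => //=.
rewrite -E conjgE sV -!mulgA; congr (_ * _); congr (_ * _).
by rewrite mulgA sK mul1g.
Qed.

Lemma red_cat t1 t2 : size (t1 ++ t2) = len (wv (t1 ++ t2)) ->
  size t1 = len (wv t1) /\ size t2 = len (wv t2).
Proof.
rewrite wv_cat size_cat => E.
have := len_mul (wv t1) (wv t2); have := len_min t1; have := len_min t2.
lia.
Qed.

Lemma red_cons i t : size (i :: t) = len (wv (i :: t)) -> size t = len (wv t).
Proof. by move=> H; case: (@red_cat [:: i] t). Qed.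

Lemma uniq_red t : size t = len (wv t) -> uniq (rl t).
Proof.
elim: t => //= i t IH Hr.
have Ht := red_cons Hr.
rewrite (map_inj_uniq (@conjg_inj _ (s i))) IH // andbT.
apply/negP => /mapP [y Hy Ey].
have ys : y = s i by rewrite -(conjss i y) -Ey conjgE sV mulgA sK mul1g.
rewrite ys in Hy.
case: (exch_gen Hy) => t1 [j [t2 [Et E]]].
have := len_min (t1 ++ t2); rewrite -E -Hr Et !size_cat /=; lia.
Qed.

Lemma odd_count_mem (L : seq W) x : odd (count_mem x L) -> x \in L.
Proof.
move=> H; rewrite -has_pred1 has_count; move: H.
by case: (count _ _).
Qed.

Lemma odd_count_uniq (L : seq W) x : uniq L -> odd (count_mem x L) = (x \in L).
Proof. by move=> U; rewrite count_uniq_mem //; case: (x \in L). Qed.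

Lemma key i t : size t = len (wv t) -> s i \notin rl t ->
  len (wv t) < len (s i * wv t).
Proof.
move=> Hr Hn.
case: (len_red (s i * wv t)) => t' [Hs' Ew'].
have UL : uniq (rl (i :: t)).
  rewrite /= (map_inj_uniq (@conjg_inj _ (s i))) uniq_red // andbT.
  apply/negP => /mapP [y Hy Ey].
  have ys : y = s i by rewrite -(conjss i y) -Ey conjgE sV mulgA sK mul1g.
  by rewrite ys in Hy; rewrite Hy in Hn.
have sub : {subset rl (i :: t) <= rl t'}.
  move=> x Hx; apply: odd_count_mem.
  rewrite -(@parity (i :: t)) ?Ew' // odd_count_uniq //.
have := uniq_leq_size UL sub; rewrite !rl_size /= Hs' -Hr.
by [].
Qed.

Lemma len_sL i w : len (s i * w) = (len w).+1 \/ len w = (len (s i * w)).+1.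
Proof.
case: (len_red w) => t [Hr Ew]; rewrite -Ew in Hr *.
have H1 := len_sL_le i (wv t); have H2 := len_sL_ge i (wv t).
case: (boolP (s i \in rl t)) => Hin.
  case: (exch_gen Hin) => t1 [j [t2 [Et E]]].
  have := len_min (t1 ++ t2); rewrite -E.
  move: Hr; rewrite {1}Et !size_cat /= => Hr; set a := len (s i * wv t) in H1 H2 *; set b := len (wv t) in H1 H2 Hr *; lia.
have := key Hr Hin; lia.
Qed.

Lemma descL i w t : len (s i * w) < len w -> wv t = w ->
  exists t1 j t2, t = t1 ++ j :: t2 /\ s i * w = wv (t1 ++ t2).
Proof.
move=> Hl Ew; case: (len_red w) => t0 [Hr Ew0].
have Hin : s i \in rl t0.
  apply/negPn/negP => Hn; have := key (etrans Hr (congr1 _ (esym Ew0))) Hn.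
  by rewrite Ew0; lia.
have : odd (count_mem (s i) (rl t)).
  by rewrite (@parity t t0) ?Ew ?Ew0 // odd_count_uniq // uniq_red // Hr Ew0.
by move/odd_count_mem/exch_gen; rewrite Ew.
Qed.

Lemma len_sR i w : len (w * s i) = (len w).+1 \/ len w = (len (w * s i)).+1.
Proof.
have := len_sL i w^-1.
have -> : s i * w^-1 = (w * s i)^-1 by rewrite invgM sV.
by rewrite !lenV.
Qed.

Lemma descR i w t : len (w * s i) < len w -> wv t = w ->
  exists t1 j t2, t = t1 ++ j :: t2 /\ w * s i = wv (t1 ++ t2).
Proof.
move=> Hl Ew.
have E1 : s i * w^-1 = (w * s i)^-1 by rewrite invgM sV.
have Hl' : len (s i * w^-1) < len w^-1 by rewrite E1 !lenV.
have Ew' : wv (rev t) = w^-1 by rewrite wv_rev Ew.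
case: (descL Hl' Ew') => t1 [j [t2 [Et E]]].
exists (rev t2), j, (rev t1); split.
  by rewrite -(revK t) Et rev_cat rev_cons cat_rcons.
by rewrite -(invgK (w * s i)) invgM sV E -rev_cat wv_rev.
Qed.

Lemma red_subseq t : exists t', [/\ subseq t' t, wv t' = wv t & size t' = len (wv t)].
Proof.
elim/last_ind: t => [|t i [t' [Hsub Ew Hs]]].
  by exists [::]; rewrite /= len1.
case: (len_sR i (wv t')) => H.
- exists (rcons t' i); split.
  + by rewrite -!cats1 cat_subseq.
  + by rewrite !wv_rcons Ew.
  + by rewrite size_rcons wv_rcons -Ew H Hs Ew.
- have Hl : len (wv t' * s i) < len (wv t') by rewrite H.
  case: (descR Hl (erefl _)) => t1 [j [t2 [Et E]]].
  exists (t1 ++ t2); split.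
  + apply: subseq_trans (subseq_rcons t i); apply: subseq_trans Hsub.
    by rewrite Et; apply: cat_subseq => //; apply: subseq_cons.
  + by rewrite wv_rcons -E Ew.
  + rewrite wv_rcons -Ew; move: Hs; rewrite -Ew Et !size_cat /= => Hs.
    move: H; rewrite Et; set a := len _; set b := len _; lia.
Qed.

Lemma cat_split (T : Type) (a b c d : seq T) (k : T) : a ++ b = c ++ k :: d ->
  (exists u, a = c ++ k :: u /\ d = u ++ b) \/ (exists u, c = a ++ u /\ b = u ++ k :: d).
Proof.
elim: a c => [|x a IH] c /= E; move: E.
  by move=> ->; right; exists c.
case: c => [|y c] /=.
  by case=> -> <-; left; exists a.
case=> -> /IH [[u [-> ->]] | [u [-> ->]]].
  by left; exists u.
by right; exists u.
Qed.

Section Par.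
Variable J : {set I}.
Local Notation inP := (inPar s J).

Lemma inPar1 : inP 1.
Proof. by exists [::]. Qed.

Lemma inParM x y : inP x -> inP y -> inP (x * y).
Proof.
case=> t1 [H1 <-] [t2 [H2 <-]]; exists (t1 ++ t2); split; last exact: wv_cat.
by move=> i; rewrite mem_cat => /orP [/H1|/H2].
Qed.

Lemma inParV x : inP x -> inP x^-1.
Proof.
case=> t [H <-]; exists (rev t); split; last exact: wv_rev.
by move=> i; rewrite mem_rev => /H.
Qed.

Lemma inPar_s j : j \in J -> inP (s j).
Proof. by move=> Hj; exists [:: j]; split; [move=> i; rewrite inE => /eqP -> | rewrite /= mulg1]. Qed.

Lemma inPar_red w : inP w -> exists t,
  [/\ forall i, i \in t -> i \in J, wv t = w & size t = len w].
Proof.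
case=> t [H <-]; case: (red_subseq t) => t' [Hsub Ew Hs].
by exists t'; split => // i /(mem_subseq Hsub) /H.
Qed.

Lemma inPar_s_inv i : inP (s i) -> i \in J.
Proof.
case/inPar_red => t [H Ew]; rewrite len_s.
case: t H Ew => [|j [|]] //= H Ew _.
by rewrite mulg1 in Ew; rewrite -(s_inj Ew); apply: H; rewrite inE.
Qed.

Lemma red_letters t : inP (wv t) -> size t = len (wv t) ->
  forall i, i \in t -> i \in J.
Proof.
elim: t => //= i t IH HJ Hr k.
have Ht := red_cons Hr.
have E1 : s i * (s i * wv t) = wv t by rewrite mulgA sK mul1g.
have Hl : len (s i * (s i * wv t)) < len (s i * wv t).
  by rewrite E1 -Ht -Hr.
case: HJ => tJ [HtJ EJ].
case: (descL Hl EJ) => t1 [j [t2 [Et E]]].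
have HJt : inP (wv t).
  rewrite -E1 E; exists (t1 ++ t2); split => // m Hm; apply: HtJ.
  by rewrite Et !mem_cat inE; move: Hm; rewrite mem_cat => /orP [->|->]; rewrite ?orbT.
have Hi : i \in J.
  apply: inPar_s_inv.
  have -> : s i = (s i * wv t) * (wv t)^-1 by rewrite mulgK.
  by apply: inParM; [exists tJ | apply: inParV].
rewrite inE => /orP [/eqP -> //|]; exact: IH.
Qed.

End Par.

Lemma supp_red t : size t = len (wv t) -> supp s (wv t) = [set i | i \in t].
Proof.
move=> Hr; apply/setP => i; rewrite !inE; apply/idP/idP.
  move/pboolP => [t' [Ew [Hs Hi]]].
  have := @red_letters [set i | i \in t] t' _ _ i Hi; rewrite inE; apply.
    by rewrite Ew; exists t; split => // m; rewrite inE.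
  by rewrite Ew.
by move=> Hi; apply/pboolP; exists t.
Qed.

Lemma supp_inPar J w : inPar s J w <-> supp s w \subset J.
Proof.
case: (len_red w) => t [Hs Ew]; rewrite -Ew in Hs *; rewrite supp_red //.
split.
  by move=> H; apply/subsetP => i; rewrite inE; apply: red_letters.
by move/subsetP => H; exists t; split => // i Hi; apply: H; rewrite inE.
Qed.

Lemma inPar_supp w : inPar s (supp s w) w.
Proof. by apply/supp_inPar. Qed.

Lemma supp_mul x y : len (x * y) = len x + len y ->
  supp s x \subset supp s (x * y) /\ supp s y \subset supp s (x * y).
Proof.
case: (len_red x) => tx [Hx Ex]; case: (len_red y) => ty [Hy Ey]; subst x y => E.
have Hr : size (tx ++ ty) = len (wv (tx ++ ty)) by rewrite wv_cat E size_cat Hx Hy.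
rewrite -wv_cat !supp_red // ?Hx ?Hy //.
by split; apply/subsetP => i; rewrite !inE mem_cat => ->; rewrite ?orbT.
Qed.

Definition pmin J a := forall c, inPar s J c -> len a <= len (a * c).

Lemma min_add J a b : pmin J a -> inPar s J b -> len (a * b) = len a + len b.
Proof.
move=> Ha /inPar_red [tb0 [HJ <- _]].
case: (red_subseq tb0) => tb1 [Hsub <- Hr].
have {HJ Hsub} HJ : forall i, i \in tb1 -> i \in J.
  by move=> i /(mem_subseq Hsub) /HJ.
clear tb0; elim/last_ind: tb1 HJ Hr => [|tb j IH] HJ Hr.
  by rewrite /= mulg1 len1 addn0.
have HJ' : forall i, i \in tb -> i \in J.
  by move=> i Hi; apply: HJ; rewrite mem_rcons inE Hi orbT.
have Hr' : size tb = len (wv tb).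
  by have := @red_cat tb [:: j]; rewrite cats1 => /(_ Hr) [].
have {IH} IH := IH HJ' Hr'.
have Hrj : len (wv tb * s j) = (len (wv tb)).+1.
  by rewrite -wv_rcons -Hr size_rcons Hr'.
rewrite wv_rcons mulgA Hrj.
case: (len_sR j (a * wv tb)) => H.
  by rewrite H IH addnS.
exfalso.
have Hl : len (a * wv tb * s j) < len (a * wv tb) by rewrite H.
case: (len_red a) => ta [Ha' Ea].
have Eab : wv (ta ++ tb) = a * wv tb by rewrite wv_cat Ea.
case: (descR Hl Eab) => t1 [k [t2 [Et E]]].
case: (cat_split Et) => [[u [Eta Et2]] | [u [Et1 Etb]]].
- (* deletion inside a *)
  have Hc : inPar s J (wv tb * s j * (wv tb)^-1).
    apply: inParM; last by apply: inParV; exists tb.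
    by apply: inParM; [exists tb | apply: inPar_s; apply: HJ; rewrite mem_rcons inE eqxx].
  have := Ha _ Hc.
  have -> : a * (wv tb * s j * (wv tb)^-1) = wv (t1 ++ u).
    by rewrite !mulgA E Et2 catA wv_cat mulgK.
  have := len_min (t1 ++ u).
  move: Ha'; rewrite Eta !size_cat /=; set x := len a; set y := len _; lia.
- (* deletion inside b *)
  have E2 : wv tb * s j = wv (u ++ t2).
    by apply: (@mulgI _ a); rewrite mulgA E Et1 -catA wv_cat Ea.
  have := len_min (u ++ t2); rewrite -E2 Hrj -Hr' Etb !size_cat /=.
  lia.
Qed.

Lemma pmin_ex J w : exists a, pmin J a /\ inPar s J (a^-1 * w).
Proof.
have ex : exists n, pbool (exists c, inPar s J c /\ len (w * c) = n).
  by exists (len w); apply/pboolP; exists 1; split; [apply: inPar1 | rewrite mulg1].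
case: (ex_minnP ex) => n /pboolP [c0 [Hc0 En]] Hmin.
exists (w * c0); split.
  move=> c Hc; rewrite En -mulgA; apply: Hmin; apply/pboolP.
  by exists (c0 * c); split => //; apply: inParM.
by rewrite invgM mulgVK; apply: inParV.
Qed.

Lemma pmin_inX J a : pmin J a -> inX s J a.
Proof.
move=> Ha i Hi; have := Ha _ (inPar_s Hi).
set x := len (a * s i); set y := len a; case: (len_sR i a); rewrite -/x -/y; lia.
Qed.

Lemma pmin_uniq J a1 a2 c : pmin J a1 -> pmin J a2 -> inPar s J c ->
  a2 = a1 * c -> c = 1.
Proof.
move=> H1 H2 Hc E.
have L1 := min_add H1 Hc.
have E' : a1 = a2 * c^-1 by rewrite E mulgK.
have L2 := min_add H2 (inParV Hc).
rewrite -E in L1; rewrite -E' lenV in L2.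
apply: len_eq0; move: L1 L2; set x := len a1; set y := len a2; set z := len c; lia.
Qed.

Lemma inX_pmin J a : inX s J a -> pmin J a.
Proof.
move=> Ha; case: (pmin_ex J a) => a0 [H0 Hc].
set c := a0^-1 * a in Hc.
have Ea : a = a0 * c by rewrite /c mulVKg.
case: (inPar_red Hc) => tc [HJ Ec Hs].
case/lastP: tc HJ Ec Hs => [|tc j] HJ Ec Hs.
  by rewrite Ea -Ec mulg1.
exfalso.
have Hj : j \in J by apply: HJ; rewrite mem_rcons inE eqxx.
have HJ' : inPar s J (wv tc) by exists tc; split => // i Hi; apply: HJ; rewrite mem_rcons inE Hi orbT.
have E2 : a * s j = a0 * wv tc by rewrite Ea -Ec wv_rcons -!mulgA sK mulg1.
have L := Ha j Hj; rewrite E2 (min_add H0 HJ') Ea (min_add H0 Hc) -Hs size_rcons in L.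
have := len_min tc; move: L; set x := len a0; set y := len (wv tc); set z := size tc; clearbody x y z; lia.
Qed.

Lemma decomp_uniq J a1 b1 a2 b2 : inX s J a1 -> inX s J a2 ->
  inPar s J b1 -> inPar s J b2 -> a1 * b1 = a2 * b2 -> b1 = b2.
Proof.
move=> /inX_pmin H1 /inX_pmin H2 Hb1 Hb2 E.
have Hc : inPar s J (b1 * b2^-1) by apply: inParM => //; apply: inParV.
have E2 : a2 = a1 * (b1 * b2^-1) by rewrite mulgA E mulgK.
by have := pmin_uniq H1 H2 Hc E2 => /eqP; rewrite mulg_eq1 invgK => /eqP.
Qed.

Lemma parcomp_spec J w : exists a,
  [/\ inX s J a, inPar s J (parcomp s J w) & w = a * parcomp s J w].
Proof.
rewrite /parcomp.
apply: (@epsilon_spec W (inhabits (1 : W))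
   (fun b => exists a, [/\ inX s J a, inPar s J b & w = a * b])).
case: (pmin_ex J w) => a [Ha Hb]; exists (a^-1 * w), a; split => //.
  exact: pmin_inX.
by rewrite mulVKg.
Qed.

Lemma parcompE J a b : inX s J a -> inPar s J b -> parcomp s J (a * b) = b.
Proof.
move=> Ha Hb; case: (parcomp_spec J (a * b)) => a' [Ha' Hb' E].
by apply: (decomp_uniq Ha' Ha Hb' Hb); rewrite -E.
Qed.

Lemma inX1 J : inX s J 1.
Proof. by move=> i _; rewrite mul1g len1 len_s. Qed.

Lemma parcomp_id J w : inPar s J w -> parcomp s J w = w.
Proof. by move=> Hw; rewrite -{1}(mul1g w) parcompE //; apply: inX1. Qed.

Lemma inPar_parcomp J w : inPar s J (parcomp s J w).
Proof. by case: (parcomp_spec J w) => a []. Qed.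

Lemma parcomp_len J w : exists a, [/\ inX s J a, w = a * parcomp s J w &
  len w = len a + len (parcomp s J w)].
Proof.
case: (parcomp_spec J w) => a [Ha Hb E]; exists a; split => //.
by rewrite {1}E (min_add (inX_pmin Ha) Hb).
Qed.

Lemma inPar_mono (J K : {set I}) w : J \subset K -> inPar s J w -> inPar s K w.
Proof.
by move=> /subsetP sub [t [H E]]; exists t; split => // i /H /sub.
Qed.

Lemma parcompT (J1 J2 : {set I}) v : J1 \subset J2 ->
  parcomp s J1 (parcomp s J2 v) = parcomp s J1 v.
Proof.
move=> sub.
case: (parcomp_spec J2 v) => a2 [Ha2 Hb2 E2].
move: Hb2 E2; set b2 := parcomp s J2 v => Hb2 E2.
case: (parcomp_spec J1 b2) => c [Hc Hd E1].
move: Hd E1; set d := parcomp s J1 b2 => Hd E1.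
have HcJ2 : inPar s J2 c.
  have -> : c = b2 * d^-1 by rewrite E1 mulgK.
  by apply: inParM => //; apply: inParV; apply: inPar_mono Hd.
have Hx : inX s J1 (a2 * c).
  move=> j Hj.
  have Hcj : inPar s J2 (c * s j).
    by apply: inParM => //; apply: inPar_s; apply: (subsetP sub).
  rewrite -mulgA (min_add (inX_pmin Ha2) Hcj) (min_add (inX_pmin Ha2) HcJ2).
  by rewrite ltn_add2l; apply: Hc.
by rewrite E2 E1 mulgA parcompE.
Qed.

Lemma le_supp u v : cox_le s u v -> supp s u \subset supp s v.
Proof.
rewrite /cox_le => E; case: (parcomp_len (supp s u) v) => a [Ha Ev Hl].
rewrite E in Ev Hl; rewrite Ev in Hl.
by rewrite Ev; case: (supp_mul Hl).
Qed.

Lemma le_leftweak u v : cox_le s u v -> leftweak s u v.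
Proof.
rewrite /cox_le => E; case: (parcomp_len (supp s u) v) => a [Ha Ev Hl].
by rewrite E in Ev Hl; exists a.
Qed.

Lemma interval u v : cox_le s u v ->
  forall w, (cox_le s u w /\ cox_le s w v) <->
    (exists J : {set I},
      [/\ supp s u \subset J, J \subset supp s v & w = parcomp s J v]).
Proof.
move=> Huv w; split.
  case=> Huw Hwv; exists (supp s w); split.
  - exact: le_supp.
  - exact: le_supp.
  - by rewrite Hwv.
case=> J [HuJ HJv ->]; split.
  by rewrite /cox_le parcompT.
rewrite /cox_le.
have HwJ : supp s (parcomp s J v) \subset J by apply/supp_inPar; apply: inPar_parcomp.
by rewrite -(@parcompT _ J v HwJ) parcomp_id //; apply: inPar_supp.
Qed.

Lemma upset u k : par_index s (supp s u) k -> upset_card s u k.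
Proof.
set J := supp s u.
case=> r [Hr1 Hr2].
pose x a := r a * (parcomp s J (r a))^-1.
have Hx : forall a, inX s J (x a).
  move=> a; case: (parcomp_spec J (r a)) => a' [Ha' _ E].
  by rewrite /x {1}E mulgK.
have Ex : forall a, r a = x a * parcomp s J (r a) by move=> a; rewrite /x mulgVK.
have HuJ : inPar s J u by apply: inPar_supp.
exists (fun a => x a * u); split.
  move=> a b /mulIg Eab; apply: Hr1.
  rewrite (Ex a) (Ex b) Eab invgM mulgA mulgVK.
  by apply: inParM; [apply: inParV|]; apply: inPar_parcomp.
move=> w; split.
  rewrite /cox_le -/J => Hw.
  case: (parcomp_spec J w) => y [Hy _ Ew]; rewrite Hw in Ew.
  case: (Hr2 w) => a Ha; exists a.
  have Hc : inPar s J ((x a)^-1 * y).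
    have -> : (x a)^-1 * y = parcomp s J (r a) * ((r a)^-1 * w) * u^-1.
      by rewrite /x Ew invgM invgK !mulgA mulgK.
    by apply: inParM; [apply: inParM => //; apply: inPar_parcomp | apply: inParV].
  have Ey : y = x a * ((x a)^-1 * y) by rewrite mulVKg.
  have := parcompE (Hx a) Hc; rewrite -Ey -{1}(mulg1 y) parcompE //; last exact: inPar1.
  by move=> E1; rewrite Ew Ey -E1 mulg1.
case=> a <-; rewrite /cox_le -/J; exact: parcompE.
Qed.

End Cox.

Theorem mainTheorem4 (W : groupType) (I : finType) (s : I -> W)
    (HW : coxeter_system s) (u v : W) :
  [/\ (* (1) *)
      cox_le s u v -> csupp s v \subset csupp s u,
      (* (2) *)
      cox_le s u v ->
        forall w, (cox_le s u w /\ cox_le s w v) <->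
          (exists J : {set I},
             [/\ supp s u \subset J, J \subset supp s v & w = parcomp s J v]),
      (* (3) *)
      cox_le s u v -> leftweak s u v
    & (* (4) *)
      forall k : nat, par_index s (supp s u) k -> upset_card s u k].
Proof.
split.
- by move=> H; rewrite /csupp setCS; apply: le_supp H.
- exact: interval.
- exact: le_leftweak.
- by move=> k; apply: upset.
Qed.
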